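(* Over any commutative ring $R$, the $\mathcal S$-complex $\widetilde{\mathcal O}(1)\otimes\widetilde{\mathcal O}(-1)$ is $\mathcal S$-chain homotopy equivalent to $\widetilde{\mathcal O}(0)$.
   Context: Graded modules are $\mathbb Z$-graded; $V[i]_j=V_{i+j}$; differentials have degree $-1$; $\epsilon$ is the sign map ($(-1)^i$ on degree $i$). An $\mathcal S$-complex over $R$ is a chain complex $(\widetilde C,\widetilde d)$ of finitely generated free graded $R$-modules with a graded decomposition $\widetilde C=C\oplus C[-1]\oplus\mathsf R$ in which $\widetilde d=\begin{pmatrix} d&0&0\\ v&-d&\delta_2\\ \delta_1&0&r\end{pmatrix}$; $\chi$ denotes the degree $1$ map sending $C$ identically onto $C[-1]$ and zero on $C[-1]\oplus\mathsf R$. A morphism is a degree $0$ chain map commuting with the $\chi$'s; an $\mathcal S$-chain homotopy between morphisms is a degree $1$ map $\widetilde K$ with $\chi'\widetilde K+\widetilde K\chi=0$ and $\widetilde d'\widetilde K+\widetilde K\widetilde d$ equal to their difference; an $\mathcal S$-chain homotopy equivalence is a pair of morphisms whose composites are $\mathcal S$-chain homotopic to identities. The tensor product of $\mathcal S$-complexes is the tensor product chain complex (differential $\widetilde d\otimes 1+\epsilon\otimes\widetilde d'$) with $\chi^\otimes=\chi\otimes1+\epsilon\otimes\chi'$. $\widetilde{\mathcal O}(1)$: $C=R$ in degree $1$, $\mathsf R=R$ in degree $0$, $d=v=\delta_2=r=0$, $\delta_1=\mathrm{id}_R$. $\widetilde{\mathcal O}(-1)$: $C=R$ in degree $-2$,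 $\mathsf R=R$ in degree $0$, $d=v=\delta_1=r=0$, $\delta_2=\mathrm{id}_R$. $\widetilde{\mathcal O}(0)$: $C=0$, $\mathsf R=R$ in degree $0$, zero differential. *)

(* Defs.v *)
From HB Require Import structures.
From mathcomp Require Import all_boot all_order all_algebra.
Set Implicit Arguments. Unset Strict Implicit. Unset Printing Implicit Defensive.
Import Order.TTheory GRing.Theory Num.Theory.
Local Open Scope ring_scope.

(* Finitely generated free graded R-modules are given by a finite homogeneous
   basis [B] with a degree function.  An R-linear map between such modules is
   represented by its matrix [f : B -> B' -> R], where [f b b'] is the
   coefficient of the basis vector b' in f(b). *)

Section Defs.
Variable R : comPzRingType.

Definition mx (B B' : finType) := B -> B' -> R.

(* [mcomp g f] is the composite g o f (first f, then g). *)
Definition mcomp (A B C : finType) (g : mx B C) (f : mx A B) : mx A C :=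
  fun a c => \sum_(b : B) f a b * g b c.

Definition madd (A B : finType) (f g : mx A B) : mx A B := fun a b => f a b + g a b.
Definition mopp (A B : finType) (f : mx A B) : mx A B := fun a b => - f a b.
Definition mid (A : finType) : mx A A := fun a a' => (a == a')%:R.
Definition mzero (A B : finType) : mx A B := fun _ _ => 0.

Definition has_deg (A B : finType) (dA : A -> int) (dB : B -> int) (k : int)
  (f : mx A B) : Prop := forall a b, f a b != 0 -> dB b = dA a + k.

(* A graded chain complex of f.g. free graded modules together with a map chi:
   all that the notions of S-morphism / S-homotopy use. *)
Record chiCx := ChiCx {
  cB : finType;
  cdeg : cB -> int;
  cd : mx cB cB;
  cchi : mx cB cB }.

(* S-complex data: C (basis BC) and the module R (basis BR); blocks of the
   differential [[d,0,0],[v,-d,delta2],[delta1,0,r]]. *)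
Record SData := SD {
  BC : finType; BRR : finType;
  degC : BC -> int; degR : BRR -> int;
  sd : mx BC BC; sv : mx BC BC;
  sdelta1 : mx BC BRR; sdelta2 : mx BRR BC; sr : mx BRR BRR }.

(* Basis of Ctilde = C (+) C[-1] (+) R.  An element of C of degree i sits in
   degree i+1 in C[-1], since C[-1]_j = C_{j-1}. *)
Definition SB (S : SData) : finType := (BC S + (BC S + BRR S))%type.

Definition Sdeg (S : SData) (x : SB S) : int :=
  match x with
  | inl c => degC c
  | inr (inl c) => degC c + 1
  | inr (inr y) => degR y
  end.

Definition Sdiff (S : SData) : mx (SB S) (SB S) := fun x y =>
  match x, y with
  | inl c, inl c' => sd c c'
  | inl c, inr (inl c') => sv c c'
  | inl c, inr (inr y') => sdelta1 c y'
  | inr (inl c), inr (inl c') => - sd c c'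
  | inr (inr y), inr (inl c') => sdelta2 y c'
  | inr (inr y), inr (inr y') => sr y y'
  | _, _ => 0
  end.

Definition Schi (S : SData) : mx (SB S) (SB S) := fun x y =>
  match x, y with
  | inl c, inr (inl c') => (c == c')%:R
  | _, _ => 0
  end.

Definition is_Scomplex (S : SData) : Prop :=
  has_deg (@Sdeg S) (@Sdeg S) (-1) (@Sdiff S) /\
  mcomp (@Sdiff S) (@Sdiff S) = @mzero _ _.

Definition SCx (S : SData) : chiCx := @ChiCx (SB S) (@Sdeg S) (@Sdiff S) (@Schi S).

Definition eps (i : int) : R := (-1) ^+ `|i|%N.

Definition tens_mx (X Y : chiCx) (f : mx (cB X) (cB X)) (g : mx (cB Y) (cB Y))
  : mx ((cB X * cB Y)%type) ((cB X * cB Y)%type) := fun p q =>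
  f p.1 q.1 * (p.2 == q.2)%:R + eps (@cdeg X p.1) * (p.1 == q.1)%:R * g p.2 q.2.

Definition tensor (X Y : chiCx) : chiCx :=
  @ChiCx ((cB X * cB Y)%type) (fun p : (cB X * cB Y)%type => cdeg p.1 + cdeg p.2)
    (@tens_mx X Y (@cd X) (@cd Y)) (@tens_mx X Y (@cchi X) (@cchi Y)).

Definition is_Smorphism (X Y : chiCx) (f : mx (cB X) (cB Y)) : Prop :=
  [/\ has_deg (@cdeg X) (@cdeg Y) 0 f,
      mcomp (@cd Y) f = mcomp f (@cd X) &
      mcomp (@cchi Y) f = mcomp f (@cchi X)].

Definition is_Shomotopy (X Y : chiCx) (f g K : mx (cB X) (cB Y)) : Prop :=
  [/\ has_deg (@cdeg X) (@cdeg Y) 1 K,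
      madd (mcomp (@cchi Y) K) (mcomp K (@cchi X)) = @mzero _ _ &
      madd (mcomp (@cd Y) K) (mcomp K (@cd X)) = madd f (mopp g)].

Definition Shomotopic (X Y : chiCx) (f g : mx (cB X) (cB Y)) : Prop :=
  exists K, is_Shomotopy f g K.

Definition S_htpy_equiv (X Y : chiCx) : Prop :=
  exists (f : mx (cB X) (cB Y)) (g : mx (cB Y) (cB X)),
    [/\ is_Smorphism f, is_Smorphism g,
        Shomotopic (mcomp g f) (@mid _) & Shomotopic (mcomp f g) (@mid _)].

Definition O1 : SData :=
  @SD unit unit (fun _ => 1) (fun _ => 0)
      (@mzero _ _) (@mzero _ _) (fun _ _ => 1) (@mzero _ _) (@mzero _ _).

Definition Om1 : SData :=
  @SD unit unit (fun _ => -2) (fun _ => 0)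
      (@mzero _ _) (@mzero _ _) (@mzero _ _) (fun _ _ => 1) (@mzero _ _).

Definition O0 : SData :=
  @SD void unit (fun v => match v with end) (fun _ => 0)
      (@mzero _ _) (@mzero _ _) (@mzero _ _) (@mzero _ _) (@mzero _ _).

End Defs.

(* Main.v *)
Require Import Defs.
From mathcomp Require Import all_boot all_order all_algebra.
From mathcomp Require Import ring.
From Stdlib Require Import FunctionalExtensionality.
Import GRing.Theory.
Local Open Scope ring_scope.

Section S.
Variable R : comPzRingType.
Lemma sum_unit (F : unit -> R) : \sum_(i : unit) F i = F tt.
Proof. by rewrite (big_pred1 tt) // => -[]. Qed.
Lemma sum_void (F : void -> R) : \sum_(i : void) F i = 0.
Proof. by rewrite big_pred0 // => -[]. Qed.
Lemma sum3 (F : (unit + (unit + unit))%type -> R) :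
  \sum_i F i = F (inl tt) + F (inr (inl tt)) + F (inr (inr tt)).
Proof. rewrite !big_sumType !sum_unit; exact: addrA. Qed.
Lemma sumO (F : (void + (void + unit))%type -> R) :
  \sum_i F i = F (inr (inr tt)).
Proof. by rewrite !big_sumType !sum_void !sum_unit /= !add0r. Qed.
Lemma sumP (A B : finType) (F : (A * B)%type -> R) :
  \sum_p F p = \sum_a \sum_b F (a, b).
Proof. by rewrite pair_bigA; apply: eq_bigr => -[]. Qed.

Notation X := (tensor (SCx (O1 R)) (SCx (Om1 R))).
Notation Y := (SCx (O0 R)).
Definition ff : mx R (cB X) (cB Y) := fun p _ =>
  match p with
  | (inl _, inr (inl _)) | (inr (inl _), inl _) | (inr (inr _), inr (inr _)) => 1
  | _ => 0 end.
Definition gg : mx R (cB Y) (cB X) := fun _ q =>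
  match q with
  | (inl _, inr (inl _)) => -1
  | (inr (inl _), inl _) | (inr (inr _), inr (inr _)) => 1
  | _ => 0 end.
Definition KK : mx R (cB X) (cB X) := fun p q =>
  match p, q with
  | (inr (inr _), inl _), (inl _, inl _) => -1
  | (inr (inr _), inr (inl _)), (inr (inl _), inl _) => 1
  | (inr (inr _), inr (inl _)), (inl _, inr (inl _)) => -1
  | (inl _, inr (inl _)), (inl _, inr (inr _)) => 1
  | (inr (inl _), inl _), (inl _, inr (inr _)) => 1
  | (inr (inl _), inr (inl _)), (inr (inl _), inr (inr _)) => -1
  | _, _ => 0 end.

Ltac simp := rewrite /mzero ?expr0 ?expr1 ?expr2 ?mulrNN ?sqrrN ?expr1n;
  rewrite ?(mulr0, mul0r, mulr1, mul1r, addr0, add0r, oppr0, mulN1r, mulrN1, opprK, subrr, addrN, addNr).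
Ltac ext := apply functional_extensionality; intro; apply functional_extensionality; intro.
Ltac cases := repeat match goal with
  | x : ?T |- _ => let T' := eval hnf in T in
     match T' with
     | prod _ _ => destruct x
     | sum _ _ => destruct x
     | unit => destruct x
     | void => destruct x
     end
  end.
Ltac pre := apply functional_extensionality; intros p; apply functional_extensionality; intros q;
  rewrite /mcomp /madd /mopp /mid /= ?sumP ?sum3 ?sumO /tens_mx /eps; revert p q.
Ltac fin := rewrite /= /ff /gg /KK /=; rewrite /mzero ?mulr1n ?mulr0n ?expr0 ?expr1 ?expr2;
  rewrite ?mulr0 ?mul0r ?mulr1 ?mul1r; rewrite ?addr0 ?add0r;
  rewrite ?oppr0 ?mulN1r ?mulrN1 ?opprK; try by rewrite ?(mulr0, mul0r, mul1r, mulr1, addr0, add0r, oppr0, subr0, subrr, addNr).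
Tactic Notation "cXX" := move=> [[[]|[[]|[]]] [[]|[[]|[]]]] [[[]|[[]|[]]] [[]|[[]|[]]]]; fin.
Tactic Notation "cXY" := move=> [[[]|[[]|[]]] [[]|[[]|[]]]] [[]|[[]|[]]]; fin.
Tactic Notation "cYX" := move=> [[]|[[]|[]]] [[[]|[[]|[]]] [[]|[[]|[]]]]; fin.
Tactic Notation "cYY" := move=> [[]|[[]|[]]] [[]|[[]|[]]]; fin.
Ltac degt := let a := fresh in let b := fresh in move=> a b; cases; rewrite /tens_mx /eps /=; simp;
  rewrite ?eqxx //.

Lemma ff_d : mcomp (@cd _ Y) ff = mcomp ff (@cd _ X).
Proof. pre; cXY. Qed.
Lemma ff_chi : mcomp (@cchi _ Y) ff = mcomp ff (@cchi _ X).
Proof. pre; cXY. Qed.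
Lemma gg_d : mcomp (@cd _ X) gg = mcomp gg (@cd _ Y).
Proof. pre; cYX. Qed.
Lemma gg_chi : mcomp (@cchi _ X) gg = mcomp gg (@cchi _ Y).
Proof. pre; cYX. Qed.
Lemma K_chi : madd (mcomp (@cchi _ X) KK) (mcomp KK (@cchi _ X)) = @mzero _ _ _.
Proof. pre; cXX. Qed.
Lemma K_d : madd (mcomp (@cd _ X) KK) (mcomp KK (@cd _ X)) = madd (mcomp gg ff) (mopp (@mid _ _)).
Proof. pre; cXX. Qed.
Lemma Z_chi : madd (mcomp (@cchi _ Y) (@mzero _ _ _)) (mcomp (@mzero _ _ _) (@cchi _ Y)) = @mzero _ _ _.
Proof. pre; cYY. Qed.
Lemma Z_d : madd (mcomp (@cd _ Y) (@mzero _ _ _)) (mcomp (@mzero _ _ _) (@cd _ Y)) = madd (mcomp ff gg) (mopp (@mid _ _)).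
Proof. pre; cYY. Qed.

Lemma lemma2p7' : S_htpy_equiv X Y.
Proof.
exists ff, gg; split.
- split; [degt | exact: ff_d | exact: ff_chi].
- split; [degt | exact: gg_d | exact: gg_chi].
- exists KK; split; [degt | exact: K_chi | exact: K_d].
- exists (@mzero R _ _); split; [degt | exact: Z_chi | exact: Z_d].
Qed.
End S.

Theorem lemma2p7 (R : comPzRingType) :
  S_htpy_equiv (tensor (SCx (O1 R)) (SCx (Om1 R))) (SCx (O0 R)).
Proof. exact: lemma2p7'. Qed.
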